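(* For the system $$(u_{0,0}-u_{1,1})(v_{1,0}-v_{0,1})-\alpha+\beta=0,\qquad (v_{0,0}-v_{1,1})(u_{1,0}-u_{0,1})-\alpha+\beta=0,$$ the pair $$(\rho,\sigma)=\big(\ln|(u_{1,0}-u_{-1,0})(v_{1,0}-v_{-1,0})|,\ \ \ln|(u_{0,1}-u_{-1,0})(v_{0,1}-v_{-1,0})|\big)$$ is a conservation law, i.e. $(\mathcal T-1)\rho=(\mathcal S-1)\sigma$ on solutions.
   Context: Unknowns $u,v$ on $\mathbb Z^2$, $u_{i,j}=u(n+i,m+j)$, similarly $v$; $\alpha\neq\beta$ constants. Shifts $\mathcal S:n\mapsto n+1$, $\mathcal T:m\mapsto m+1$, acting by $\mathcal S^k\mathcal T^\ell(f_{i,j})=f_{i+k,j+\ell}$. A conservation law is a pair $(\rho,\sigma)$ of functions of finitely many shifts of $(u,v)$ with $(\mathcal T-1)\rho=(\mathcal S-1)\sigma$ holding for all solutions of the system (on which all arguments of logarithms are nonzero). *)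

(* Defs.v *)
From Stdlib Require Import Reals ZArith.
Open Scope R_scope.

Definition sh (f : Z -> Z -> R) (n m : Z) (i j : Z) : R := f (n + i)%Z (m + j)%Z.

Definition system (alpha beta : R) (u v : Z -> Z -> R) (n m : Z) : Prop :=
  (sh u n m 0 0 - sh u n m 1 1) * (sh v n m 1 0 - sh v n m 0 1) - alpha + beta = 0 /\
  (sh v n m 0 0 - sh v n m 1 1) * (sh u n m 1 0 - sh u n m 0 1) - alpha + beta = 0.

Definition rho_arg (u v : Z -> Z -> R) (n m : Z) : R :=
  (sh u n m 1 0 - sh u n m (-1) 0) * (sh v n m 1 0 - sh v n m (-1) 0).
Definition sigma_arg (u v : Z -> Z -> R) (n m : Z) : R :=
  (sh u n m 0 1 - sh u n m (-1) 0) * (sh v n m 0 1 - sh v n m (-1) 0).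

Definition cl_rho (u v : Z -> Z -> R) (n m : Z) : R := ln (Rabs (rho_arg u v n m)).
Definition cl_sigma (u v : Z -> Z -> R) (n m : Z) : R := ln (Rabs (sigma_arg u v n m)).

(* Main.v *)
Require Import Defs.
From Stdlib Require Import Reals ZArith Lra Lia Field.
Open Scope R_scope.

Lemma alg (g u00 u11 u10 u01 um0 um1 v00 v11 v10 v01 vm0 vm1 : R) :
  g <> 0 ->
  (u00 - u11) * (v10 - v01) = g ->
  (v00 - v11) * (u10 - u01) = g ->
  (um0 - u01) * (v00 - vm1) = g ->
  (vm0 - v01) * (u00 - um1) = g ->
  ((u11 - um1) * (v11 - vm1)) * ((u01 - um0) * (v01 - vm0)) =
  ((u11 - u00) * (v11 - v00)) * ((u10 - um0) * (v10 - vm0)).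
Proof.
  intros Hg H1 H2 H3 H4.
  assert (A1 : v10 - v01 <> 0) by (intro E; rewrite E, Rmult_0_r in H1; auto).
  assert (A2 : u10 - u01 <> 0) by (intro E; rewrite E, Rmult_0_r in H2; auto).
  assert (A3 : um0 - u01 <> 0) by (intro E; rewrite E, Rmult_0_l in H3; auto).
  assert (A4 : vm0 - v01 <> 0) by (intro E; rewrite E, Rmult_0_l in H4; auto).
  assert (E1 : u11 = u00 - g / (v10 - v01)) by (rewrite <- H1; field; auto).
  assert (E2 : v11 = v00 - g / (u10 - u01)) by (rewrite <- H2; field; auto).
  assert (E3 : vm1 = v00 - g / (um0 - u01)) by (rewrite <- H3; field; auto).
  assert (E4 : um1 = u00 - g / (vm0 - v01)) by (rewrite <- H4; field; auto).
  subst u11 v11 vm1 um1. field. repeat split; auto.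
Qed.

Lemma lnid (a b c d : R) : a <> 0 -> b <> 0 -> c <> 0 -> d <> 0 -> a * d = c * b ->
  ln (Rabs a) - ln (Rabs b) = ln (Rabs c) - ln (Rabs d).
Proof.
  intros Ha Hb Hc Hd E.
  assert (ln (Rabs a) + ln (Rabs d) = ln (Rabs c) + ln (Rabs b)).
  { rewrite <- !ln_mult by (apply Rabs_pos_lt; auto).
    rewrite <- !Rabs_mult, E; reflexivity. }
  lra.
Qed.

Theorem mainTheorem5 (alpha beta : R) (u v : Z -> Z -> R) :
  alpha <> beta ->
  (forall n m : Z, system alpha beta u v n m) ->
  (forall n m : Z, rho_arg u v n m <> 0 /\ sigma_arg u v n m <> 0) ->
  forall n m : Z,
    cl_rho u v n (m + 1)%Z - cl_rho u v n m = cl_sigma u v (n + 1)%Z m - cl_sigma u v n m.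
Proof.
  intros Hab Hs Hnz n m.
  unfold cl_rho, cl_sigma.
  destruct (Hnz n (m+1)%Z) as [Ha _].
  destruct (Hnz n m) as [Hb Hd].
  destruct (Hnz (n+1)%Z m) as [_ Hc].
  apply lnid; auto.
  destruct (Hs n m) as [H1 H2].
  destruct (Hs (n-1)%Z m) as [H3 H4].
  unfold rho_arg, sigma_arg, system, sh in *.
  replace (n + 1 + -1)%Z with n in * by lia.
  replace (n + 1 + 0)%Z with (n+1)%Z in * by lia.
  replace (n - 1 + 0)%Z with (n + -1)%Z in * by lia.
  replace (n - 1 + 1)%Z with n in * by lia.
  replace (n + 0)%Z with n in * by lia.
  replace (m + 1 + 0)%Z with (m+1)%Z in * by lia.
  replace (m + 0)%Z with m in * by lia.
  apply (alg (alpha - beta)); try lra.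
Qed.
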